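(* Let $A=\mathrm{diag}(G_1,\dots,G_m,[1])\in\mathbb{R}^{n\times n}$ (where the trailing block $[1]$ may or may not be present), with $G_j=\begin{bmatrix}c_j&s_j\\-s_j&c_j\end{bmatrix}$, $c_j^2+s_j^2=1$, $s_j\neq 0$, and $0<c_1<c_2<\cdots<c_m$. Let $v_0\in\mathbb{R}^n$ be a unit norm vector with $d(A,v_0)\geq 2$ and $v_0^{(1)}\neq 0$, run the iteration ACI($1$) below, and let $k_0$ and $\varrho\in(0,1)$ be such that $\|v_{k+1}^{(j)}\|\leq\varrho\|v_k^{(j)}\|$ for all $k\geq k_0$ and all blocks $j\geq 2$. Then for all $k\geq k_0$, $$\|v_{k+1}^{(1)}-v_k^{(1)}\|\leq\varrho^{\,k-k_0}.$$
   Context: Block partitioning: every $v\in\mathbb{R}^n$ is written as $v=[v^{(1)};\dots;v^{(m)};v^{(m+1)}]$ with $v^{(j)}\in\mathbb{R}^2$ for $j=1,\dots,m$ (conforming with the blocks $G_j$) and $v^{(m+1)}\in\mathbb{R}$ (present only if the block $[1]$ is present). ACI($1$): for $k=0,1,2,\dots$: $\widetilde w_k=(A-\alpha_kI)v_k$ with $\alpha_k=v_k^TAv_k$; $w_k=\widetilde w_k/\|\widetilde w_k\|$; $\widetilde v_{k+1}=(A^T-\beta_kI)w_k$ with $\beta_k=w_k^TAw_k$; $v_{k+1}=\widetilde v_{k+1}/\|\widetilde v_{k+1}\|$. $d(A,v)$ is the grade of $v$ w.r.t. $A$ (degree of the monic polynomial $p$ of smallest degree with $p(A)v=0$); $\|\cdot\|$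 is the Euclidean norm. (The paper states this with the normalization $k_0=0$, giving $\|v_{k+1}^{(1)}-v_k^{(1)}\|\leq\varrho^k$.) *)

(* Defs.v *)
From HB Require Import structures.
From mathcomp Require Import all_boot all_order all_algebra.
From mathcomp Require Import boolp reals.
Set Implicit Arguments. Unset Strict Implicit. Unset Printing Implicit Defensive.
Import Order.TTheory GRing.Theory Num.Theory.
Local Open Scope ring_scope.

Section Defs.
Variable R : realType.

Definition poly_mx_app n (A : 'M[R]_n) (p : {poly R}) (v : 'cV[R]_n) : 'cV[R]_n :=
  \sum_(i < size p) p`_i *: (A ^+ i *m v).

Definition annih_deg n (A : 'M[R]_n) (v : 'cV[R]_n) (d : nat) : Prop :=
  exists p : {poly R}, [/\ p \is monic, size p = d.+1 & poly_mx_app A p v = 0].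

Lemma annih_deg_exists n (A : 'M[R]_n) (v : 'cV[R]_n) : exists d, annih_deg A v d.
Proof.
case: n A v => [|k] A v.
  exists 0%N, 1; split; [exact: monic1 | by rewrite size_poly1 |].
  by apply/matrixP=> -[].
exists k.+1, (char_poly A); split; [exact: char_poly_monic | exact: size_char_poly |].
have CH := Cayley_Hamilton A.
rewrite /horner_mx /horner_morph horner_coef size_map_poly in CH.
rewrite /poly_mx_app.
transitivity ((\sum_(i < size (char_poly A))
   (map_poly scalar_mx (char_poly A))`_i * A ^+ i) *m v); last by rewrite CH mul0mx.
rewrite mulmx_suml; apply: eq_bigr => i _.
by rewrite coef_map /= -mulmxE mul_scalar_mx scalemxAl.
Qed.

Lemma annih_deg_existsb n (A : 'M[R]_n) (v : 'cV[R]_n) :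
  exists d, `[< annih_deg A v d >].
Proof. by have [d hd] := annih_deg_exists A v; exists d; apply/asboolP. Qed.

Definition grade n (A : 'M[R]_n) (v : 'cV[R]_n) : nat :=
  ex_minn (@annih_deg_existsb n A v).

Definition enorm n (v : 'cV[R]_n) : R := Num.sqrt (\sum_i v i 0 ^+ 2).

(* i-th coordinate (0-based, nat index), 0 if out of range *)
Definition coordn n (v : 'cV[R]_n) (i : nat) : R :=
  if insub i is Some k then v k 0 else 0.

(* j-th 2x2 block (1-based, j = 1..m): coordinates 2(j-1), 2(j-1)+1 *)
Definition blk n (v : 'cV[R]_n) (j : nat) : 'cV[R]_2 :=
  \col_(t < 2) coordn v (2 * j.-1 + t)%N.

(* A = diag(G_1,...,G_m,[1]) with G_j = [[c_j, s_j], [-s_j, c_j]];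
   b = true iff the trailing block [1] is present; size n = 2m + b. *)
Definition blockrot (m : nat) (b : bool) (c s : nat -> R) : 'M[R]_(2 * m + b) :=
  \matrix_(i, j)
    if (i < 2 * m)%N then
      (if (i./2 == j./2) then
         (if i == j then c (i./2).+1
          else if ~~ odd i then s (i./2).+1 else - s (i./2).+1)
       else 0)
    else (if i == j then 1 else 0).

Definition normalize n (x : 'cV[R]_n) : 'cV[R]_n := (enorm x)^-1 *: x.

Definition aci_w n (A : 'M[R]_n) (v : 'cV[R]_n) : 'cV[R]_n :=
  let alpha := (v^T *m A *m v) 0 0 in
  normalize ((A - alpha%:M) *m v).

Definition aci_step n (A : 'M[R]_n) (v : 'cV[R]_n) : 'cV[R]_n :=
  let w := aci_w A v in
  let beta := (w^T *m A *m w) 0 0 in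
  normalize ((A^T - beta%:M) *m w).

Definition aci_v n (A : 'M[R]_n) (v0 : 'cV[R]_n) (k : nat) : 'cV[R]_n :=
  iter k (aci_step A) v0.

End Defs.

(* Main.v *)
Require Import Defs.
From HB Require Import structures.
From mathcomp Require Import all_boot all_order all_algebra.
From mathcomp Require Import boolp reals.
From mathcomp Require Import ring lra zify.
Set Implicit Arguments. Unset Strict Implicit. Unset Printing Implicit Defensive.
Import Order.TTheory GRing.Theory Num.Theory.
Local Open Scope ring_scope.

Section Aux.
Variables (R : realType) (m : nat) (b : bool) (c s : nat -> R).
Local Notation n := (2 * m + b)%N.
Local Notation A := (blockrot m b c s).

Definition E (i j : nat) : R :=
  if (i < 2 * m)%N then
      (if (i./2 == j./2) then
         (if i == j then c (i./2).+1
          else if ~~ odd i then s (i./2).+1 else - s (i./2).+1)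
       else 0)
    else (if i == j then 1 else 0).

Lemma coordn_ord k (v : 'cV[R]_k) (i : 'I_k) : coordn v i = v i 0.
Proof. by rewrite /coordn; case: insubP => [j _ /val_inj -> //|]; rewrite ltn_ord. Qed.

Lemma coordn_out k (v : 'cV[R]_k) i : (k <= i)%N -> coordn v i = 0.
Proof. by move=> h; rewrite /coordn; case: insubP => // j; rewrite ltnNge h. Qed.

Lemma coordn_lin k (u v : 'cV[R]_k) a i : coordn (a *: u + v) i = a * coordn u i + coordn v i.
Proof. rewrite /coordn; case: insubP => // [j _ _|_]; rewrite ?mxE //; ring. Qed.

Lemma coordnZ k (u : 'cV[R]_k) a i : coordn (a *: u) i = a * coordn u i.
Proof. by rewrite /coordn; case: insubP => // *; rewrite ?mxE ?mulr0. Qed.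

Lemma coordn_mul k (M : 'M[R]_k) (v : 'cV[R]_k) (F : nat -> nat -> R) i :
  (forall (i j : 'I_k), M i j = F i j) -> (i < k)%N ->
  coordn (M *m v) i = \sum_(0 <= j < k) F i j * coordn v j.
Proof.
move=> HM hi.
rewrite (coordn_ord _ (Ordinal hi)) mxE big_mkord; apply: eq_bigr => j _.
by rewrite HM coordn_ord.
Qed.

Lemma A_E (i j : 'I_n) : A i j = E i j.
Proof. by rewrite mxE. Qed.

Lemma AT_E (i j : 'I_n) : A^T i j = E j i.
Proof. by rewrite !mxE. Qed.

Lemma sum_split (h : nat -> R) :
  \sum_(0 <= i < n) h i = \sum_(0 <= q < m) (h (2 * q)%N + h (2 * q+1)%N) + (if b then h (2 * m)%N else 0).
Proof.
rewrite (@big_cat_nat _ _ _ (2 * m)) //= ?leq_addr //; congr (_ + _).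
  elim: m => [|p IH]; first by rewrite !big_geq.
  have e : (2 * p.+1 = (2 * p).+2)%N by rewrite mulnS add2n.
  rewrite e big_nat_recr // big_nat_recr // IH (big_nat_recr p 0) // addn1; symmetry; exact: addrA.

case: b; last by rewrite big_geq // addn0.
by rewrite addn1 big_nat1.
Qed.



Lemma half2 p : ((2 * p)./2 = p)%N.
Proof. by rewrite mul2n doubleK. Qed.
Lemma half21 p : ((2 * p + 1)./2 = p)%N.
Proof. by rewrite addn1 mul2n /= uphalf_double. Qed.
Lemma odd2 p : odd (2 * p) = false.
Proof. by rewrite mul2n odd_double. Qed.
Lemma odd21 p : odd (2 * p + 1) = true.
Proof. by rewrite addn1 /= mul2n odd_double. Qed.

Lemma E_ee p q : (p < m)%N -> E (2 * p) (2 * q) = if q == p then c q.+1 else 0.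
Proof.
move=> hp; rewrite /E ifT; last lia.
rewrite !half2; have [->|hq] := eqVneq q p; first by rewrite !eqxx.
by [].
Qed.
Lemma E_eo p q : (p < m)%N -> E (2 * p) (2 * q + 1) = if q == p then s q.+1 else 0.
Proof.
move=> hp; rewrite /E ifT; last lia.
rewrite half2 half21; have [->|hq] := eqVneq q p; last by [].
rewrite ifF ?odd2 //; apply/eqP; lia.
Qed.
Lemma E_oe p q : (p < m)%N -> E (2 * p + 1) (2 * q) = if q == p then - s q.+1 else 0.
Proof.
move=> hp; rewrite /E ifT; last lia.
rewrite half2 half21; have [->|hq] := eqVneq q p; last by [].
rewrite ifF ?odd21 //; apply/eqP; lia.
Qed.
Lemma E_oo p q : (p < m)%N -> E (2 * p + 1) (2 * q + 1) = if q == p then c q.+1 else 0.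
Proof.
move=> hp; rewrite /E ifT; last lia.
rewrite !half21; have [->|hq] := eqVneq q p; first by rewrite !eqxx.
by [].
Qed.
Lemma E_el p : (p < m)%N -> E (2 * p) (2 * m) = 0.
Proof. move=> hp; rewrite /E ifT; last lia. by rewrite !half2 ifF //; apply/eqP; lia. Qed.
Lemma E_ol p : (p < m)%N -> E (2 * p + 1) (2 * m) = 0.
Proof. move=> hp; rewrite /E ifT; last lia. by rewrite half2 half21 ifF //; apply/eqP; lia. Qed.
Lemma E_le q : (q < m)%N -> E (2 * m) (2 * q) = 0.
Proof. move=> hq; rewrite /E ifF; last lia. by rewrite ifF //; apply/eqP; lia. Qed.
Lemma E_lo q : E (2 * m) (2 * q + 1) = 0.
Proof. rewrite /E ifF; last lia. by rewrite ifF //; apply/eqP; lia. Qed.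
Lemma E_ll : E (2 * m) (2 * m) = 1.
Proof. by rewrite /E ifF ?eqxx //; lia. Qed.

Lemma sum_delta (F : nat -> R) p : (p < m)%N ->
  \sum_(0 <= q < m) (if q == p then F q else 0) = F p.
Proof. by move=> hp; rewrite -big_mkcond big_nat1_eq /= hp. Qed.


Local Notation X v i := (coordn v i).

Lemma coordnB k (u v : 'cV[R]_k) i : coordn (u - v) i = coordn u i - coordn v i.
Proof. rewrite /coordn; case: insubP => // [j _ _|_]; rewrite ?mxE //; ring. Qed.

Lemma coordn_shift k (M : 'M[R]_k) (v : 'cV[R]_k) a i :
  coordn ((M - a%:M) *m v) i = coordn (M *m v) i - a * coordn v i.
Proof. by rewrite mulmxBl coordnB mul_scalar_mx coordnZ. Qed.

Lemma Av_e (v : 'cV[R]_n) p : (p < m)%N ->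
  X (A *m v) (2 * p) = c p.+1 * X v (2 * p) + s p.+1 * X v (2 * p + 1).
Proof.
move=> hp; rewrite (coordn_mul _ A_E); last lia.
rewrite sum_split.
have -> : (if b then E (2 * p) (2 * m) * X v (2 * m) else 0) = 0.
  by rewrite E_el // mul0r if_same.
rewrite addr0 (eq_bigr (fun q => if q == p then c q.+1 * X v (2 * q) + s q.+1 * X v (2 * q + 1) else 0)).
  by rewrite sum_delta.
by move=> q _; rewrite E_ee // E_eo //; case: eqP => _; rewrite ?mul0r ?addr0.
Qed.

Lemma Av_o (v : 'cV[R]_n) p : (p < m)%N ->
  X (A *m v) (2 * p + 1) = - s p.+1 * X v (2 * p) + c p.+1 * X v (2 * p + 1).
Proof.
move=> hp; rewrite (coordn_mul _ A_E); last lia.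
rewrite sum_split.
have -> : (if b then E (2 * p + 1) (2 * m) * X v (2 * m) else 0) = 0.
  by rewrite E_ol // mul0r if_same.
rewrite addr0 (eq_bigr (fun q => if q == p then - s q.+1 * X v (2 * q) + c q.+1 * X v (2 * q + 1) else 0)).
  by rewrite sum_delta.
by move=> q _; rewrite E_oe // E_oo //; case: eqP => _; rewrite ?mul0r ?addr0.
Qed.

Lemma Av_l (v : 'cV[R]_n) : X (A *m v) (2 * m) = X v (2 * m).
Proof.
have [hb|hb] := orP (orbN b).
  have Ht : forall x : R, (if b then x else 0) = x by move=> x; rewrite hb.
  rewrite (coordn_mul _ A_E); last by rewrite hb addn1.
  rewrite sum_split Ht E_ll mul1r big1_seq ?add0r // => q; rewrite mem_iota => /andP[_ hq].
  by rewrite E_le ?E_lo ?mul0r ?addr0 //; lia.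
by rewrite !coordn_out // (negbTE hb) addn0.
Qed.

Lemma ATv_e (v : 'cV[R]_n) p : (p < m)%N ->
  X (A^T *m v) (2 * p) = c p.+1 * X v (2 * p) - s p.+1 * X v (2 * p + 1).
Proof.
move=> hp; rewrite (@coordn_mul _ _ _ (fun i j => E j i) _ AT_E); last lia.
rewrite sum_split.
have -> : (if b then E (2 * m) (2 * p) * X v (2 * m) else 0) = 0.
  by rewrite E_le // mul0r if_same.
rewrite addr0 (eq_big_nat _ _ (F2 := fun q => if q == p then c q.+1 * X v (2 * q) - s q.+1 * X v (2 * q + 1) else 0)).
  by rewrite sum_delta.
move=> q /andP[_ hq]; rewrite E_ee // E_oe // [p == q]eq_sym.
by case: eqP => [->|_]; rewrite ?mul0r ?addr0 ?mulNr.
Qed.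

Lemma ATv_o (v : 'cV[R]_n) p : (p < m)%N ->
  X (A^T *m v) (2 * p + 1) = s p.+1 * X v (2 * p) + c p.+1 * X v (2 * p + 1).
Proof.
move=> hp; rewrite (@coordn_mul _ _ _ (fun i j => E j i) _ AT_E); last lia.
rewrite sum_split.
have -> : (if b then E (2 * m) (2 * p + 1) * X v (2 * m) else 0) = 0.
  by rewrite E_lo // mul0r if_same.
rewrite addr0 (eq_big_nat _ _ (F2 := fun q => if q == p then s q.+1 * X v (2 * q) + c q.+1 * X v (2 * q + 1) else 0)).
  by rewrite sum_delta.
move=> q /andP[_ hq]; rewrite E_eo // E_oo // [p == q]eq_sym.
by case: eqP => [->|_]; rewrite ?mul0r ?addr0.
Qed.

Lemma ATv_l (v : 'cV[R]_n) : X (A^T *m v) (2 * m) = X v (2 * m).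
Proof.
have [hb|hb] := orP (orbN b).
  have Ht : forall x : R, (if b then x else 0) = x by move=> x; rewrite hb.
  rewrite (@coordn_mul _ _ _ (fun i j => E j i) _ AT_E); last by rewrite hb addn1.
  rewrite sum_split Ht E_ll mul1r big1_seq ?add0r // => q; rewrite mem_iota => /andP[_ hq].
  by rewrite E_el ?E_ol ?mul0r ?addr0 //; lia.
by rewrite !coordn_out // (negbTE hb) addn0.
Qed.


Lemma enorm_X k (v : 'cV[R]_k) : enorm v = Num.sqrt (\sum_(0 <= i < k) X v i ^+ 2).
Proof. by rewrite /enorm big_mkord; congr Num.sqrt; apply: eq_bigr => i _; rewrite coordn_ord. Qed.

Lemma dot_X k (u w : 'cV[R]_k) : (u^T *m w) 0 0 = \sum_(0 <= i < k) X u i * X w i.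
Proof. by rewrite mxE big_mkord; apply: eq_bigr => i _; rewrite !coordn_ord mxE. Qed.

Lemma tail0 (v : 'cV[R]_n) : ~~ b -> X v (2 * m) = 0.
Proof. by move=> hb; rewrite coordn_out // (negbTE hb) addn0. Qed.

Lemma tailE (h : R -> R) (v : 'cV[R]_n) : h 0 = 0 ->
  (if b then h (X v (2 * m)) else 0) = h (X v (2 * m)).
Proof.
move=> h0; have [hb|hb] := orP (orbN b); first by move: (h _) => y; rewrite hb.
by rewrite tail0 // h0 if_same.
Qed.

Definition nrm2 (v : 'cV[R]_n) :=
  \sum_(0 <= q < m) (X v (2 * q) ^+ 2 + X v (2 * q + 1) ^+ 2) + X v (2 * m) ^+ 2.
Definition qf (v : 'cV[R]_n) :=
  \sum_(0 <= q < m) c q.+1 * (X v (2 * q) ^+ 2 + X v (2 * q + 1) ^+ 2) + X v (2 * m) ^+ 2.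

Lemma enorm_nrm2 v : enorm v = Num.sqrt (nrm2 v).
Proof.
rewrite enorm_X sum_split /nrm2 (tailE (h := fun x => x ^+ 2)) //.
by rewrite expr0n.
Qed.

Lemma qf_E v : (v^T *m A *m v) 0 0 = qf v.
Proof.
rewrite -mulmxA dot_X sum_split /qf Av_l (tailE (h := fun x => x * x)) ?mulr0 // -expr2.
congr (_ + _); apply: eq_big_nat => q /andP[_ hq].
rewrite Av_e // Av_o //; ring.
Qed.

Lemma sum_comb (F G : nat -> R) a :
  \sum_(0 <= q < m) (F q - 2 * a * G q + a ^+ 2 * F q) =
  \sum_(0 <= q < m) F q - 2 * a * \sum_(0 <= q < m) G q + a ^+ 2 * \sum_(0 <= q < m) F q.
Proof. by rewrite !big_split /= sumrN !mulr_sumr. Qed.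

Lemma nrm2_shift (Hcs : forall j, (1 <= j <= m)%N -> c j ^+ 2 + s j ^+ 2 = 1) v a :
  nrm2 ((A - a%:M) *m v) = nrm2 v - 2 * a * qf v + a ^+ 2 * nrm2 v.
Proof.
rewrite /nrm2 /qf !coordn_shift Av_l.
rewrite (eq_big_nat _ _ (F2 := fun q =>
   (X v (2 * q) ^+ 2 + X v (2 * q + 1) ^+ 2) - 2 * a * (c q.+1 * (X v (2 * q) ^+ 2 + X v (2 * q + 1) ^+ 2))
   + a ^+ 2 * (X v (2 * q) ^+ 2 + X v (2 * q + 1) ^+ 2))).
  rewrite sum_comb; ring.
move=> q /andP[_ hq]; rewrite !coordn_shift Av_e // Av_o //.
have h := Hcs q.+1 ltac:(lia).
apply/eqP; rewrite -subr_eq0; apply/eqP.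
transitivity ((c q.+1 ^+ 2 + s q.+1 ^+ 2 - 1) * (X v (2 * q) ^+ 2 + X v (2 * q + 1) ^+ 2)); last by rewrite h subrr mul0r.
ring.
Qed.

Lemma nrm2_shiftT (Hcs : forall j, (1 <= j <= m)%N -> c j ^+ 2 + s j ^+ 2 = 1) v a :
  nrm2 ((A^T - a%:M) *m v) = nrm2 v - 2 * a * qf v + a ^+ 2 * nrm2 v.
Proof.
rewrite /nrm2 /qf !coordn_shift ATv_l.
rewrite (eq_big_nat _ _ (F2 := fun q =>
   (X v (2 * q) ^+ 2 + X v (2 * q + 1) ^+ 2) - 2 * a * (c q.+1 * (X v (2 * q) ^+ 2 + X v (2 * q + 1) ^+ 2))
   + a ^+ 2 * (X v (2 * q) ^+ 2 + X v (2 * q + 1) ^+ 2))).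
  rewrite sum_comb; ring.
move=> q /andP[_ hq]; rewrite !coordn_shift ATv_e // ATv_o //.
have h := Hcs q.+1 ltac:(lia).
apply/eqP; rewrite -subr_eq0; apply/eqP.
transitivity ((c q.+1 ^+ 2 + s q.+1 ^+ 2 - 1) * (X v (2 * q) ^+ 2 + X v (2 * q + 1) ^+ 2)); last by rewrite h subrr mul0r.
ring.
Qed.

Lemma nrm2Z v k : nrm2 (k *: v) = k ^+ 2 * nrm2 v.
Proof.
rewrite /nrm2 mulrDr mulr_sumr !coordnZ; congr (_ + _); last by rewrite exprMn.
by apply: eq_bigr => q _; rewrite !coordnZ; ring.
Qed.

Lemma qfZ v k : qf (k *: v) = k ^+ 2 * qf v.
Proof.
rewrite /qf mulrDr mulr_sumr !coordnZ; congr (_ + _); last by rewrite exprMn.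
by apply: eq_bigr => q _; rewrite !coordnZ; ring.
Qed.

Lemma qf_ge (Hc : forall j, (1 <= j <= m)%N -> c 1 <= c j) (Hc1 : c 1 <= 1) v :
  c 1 * nrm2 v <= qf v.
Proof.
rewrite /nrm2 /qf mulrDr mulr_sumr lerD //.
  apply: ler_sum_nat => q /andP[_ hq]; apply: ler_wpM2r; first by rewrite addr_ge0 ?sqr_ge0.
  exact: Hc.
by rewrite ler_piMl ?sqr_ge0.
Qed.

Lemma qf_gap (Hc1 : forall j, (1 <= j <= m)%N -> c j <= 1) (hm : (0 < m)%N) v :
  (1 - c 1) * (X v 0 ^+ 2 + X v 1 ^+ 2) <= nrm2 v - qf v.
Proof.
rewrite /nrm2 /qf opprD addrACA subrr addr0 -sumrB big_ltn //= muln0 add0n.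
rewrite -[Y in Y <= _]addr0 lerD //; first by lra.
rewrite big_seq_cond; apply: sumr_ge0 => q /andP[]; rewrite mem_index_iota => /andP[_ hq] _.
rewrite -{1}(mul1r (_ + _)) -mulrBl.
by apply: mulr_ge0; [rewrite subr_ge0 Hc1 //; lia | rewrite addr_ge0 ?sqr_ge0].
Qed.


Lemma Av0 (v : 'cV[R]_n) (hm : (0 < m)%N) :
  X (A *m v) 0 = c 1 * X v 0 + s 1 * X v 1 /\ X (A *m v) 1 = - s 1 * X v 0 + c 1 * X v 1.
Proof. by have := Av_e v hm; have := Av_o v hm; rewrite muln0 add0n => -> ->. Qed.

Lemma ATv0 (v : 'cV[R]_n) (hm : (0 < m)%N) :
  X (A^T *m v) 0 = c 1 * X v 0 - s 1 * X v 1 /\ X (A^T *m v) 1 = s 1 * X v 0 + c 1 * X v 1.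
Proof. by have := ATv_e v hm; have := ATv_o v hm; rewrite muln0 add0n => -> ->. Qed.

Lemma step_key (Hcs : forall j, (1 <= j <= m)%N -> c j ^+ 2 + s j ^+ 2 = 1)
  (Hs1 : s 1 != 0) (Hc : forall j, (1 <= j <= m)%N -> c 1 <= c j)
  (Hc1 : forall j, (1 <= j <= m)%N -> c j <= 1) (c1pos : 0 < c 1) (hm : (0 < m)%N)
  (v : 'cV[R]_n) :
  nrm2 v = 1 -> 0 < X v 0 ^+ 2 + X v 1 ^+ 2 ->
  nrm2 (aci_step A v) = 1 /\
  X v 0 ^+ 2 + X v 1 ^+ 2 <= X (aci_step A v) 0 * X v 0 + X (aci_step A v) 1 * X v 1.
Proof.
move=> nv pp.
have c11 : c 1 <= 1 by apply: Hc1; lia.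
have cs1 := Hcs 1 ltac:(lia).
have Hc' : forall j, (1 <= j <= m)%N -> c 1 <= c j by [].
set alpha := (v^T *m A *m v) 0 0.
have aE : alpha = qf v by rewrite /alpha qf_E.
have age : c 1 <= alpha by rewrite aE; have := qf_ge Hc c11 v; rewrite nv mulr1.
have agap := qf_gap Hc1 hm v; rewrite nv -aE in agap.
have alt : alpha < 1.
  have : 0 < (1 - c 1) * (X v 0 ^+ 2 + X v 1 ^+ 2).
    apply: mulr_gt0 => //; rewrite subr_gt0 lt_neqAle c11 andbT.
    apply/eqP => e; move: cs1; rewrite e expr1n => /eqP; rewrite -subr_eq0 addrC addKr sqrf_eq0.
    by apply/negP.
  lra.
set z := (A - alpha%:M) *m v.
have nz : nrm2 z = 1 - alpha ^+ 2 by rewrite /z nrm2_shift // nv -aE; ring.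
set N1 := Num.sqrt (1 - alpha ^+ 2).
have N1pos : 0 < N1 by rewrite sqrtr_gt0; nra.
have N1sq : N1 ^+ 2 = 1 - alpha ^+ 2 by rewrite sqr_sqrtr //; nra.
set w := aci_w A v.
have wE : w = N1^-1 *: z by rewrite /w /aci_w /normalize enorm_nrm2 -/alpha -/z nz.
have nw : nrm2 w = 1 by rewrite wE nrm2Z nz -N1sq exprVn mulVf // sqrf_eq0 gt_eqF.
have [Az0 Az1] := Av0 v hm.
have w0 : X w 0 = N1^-1 * (c 1 * X v 0 + s 1 * X v 1 - alpha * X v 0).
  by rewrite wE coordnZ /z coordn_shift Az0.
have w1 : X w 1 = N1^-1 * (- s 1 * X v 0 + c 1 * X v 1 - alpha * X v 1).
  by rewrite wE coordnZ /z coordn_shift Az1.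
set beta := (w^T *m A *m w) 0 0.
have bE : beta = qf w by rewrite /beta qf_E.
have bge : c 1 <= beta by rewrite bE; have := qf_ge Hc c11 w; rewrite nw mulr1.
have bgap := qf_gap Hc1 hm w; rewrite nw -bE in bgap.
have s2 : 0 < s 1 ^+ 2 by rewrite exprn_even_gt0 //= Hs1 orbT.
have wp : 0 < X w 0 ^+ 2 + X w 1 ^+ 2.
  have -> : X w 0 ^+ 2 + X w 1 ^+ 2 =
     N1^-1 ^+ 2 * (((c 1 - alpha) ^+ 2 + s 1 ^+ 2) * (X v 0 ^+ 2 + X v 1 ^+ 2)).
    by rewrite w0 w1; ring.
  apply: mulr_gt0; first by rewrite exprn_gt0 // invr_gt0.
  apply: mulr_gt0 => //; have := sqr_ge0 (c 1 - alpha); lra.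
have blt : beta < 1.
  have : 0 < (1 - c 1) * (X w 0 ^+ 2 + X w 1 ^+ 2).
    apply: mulr_gt0 => //; rewrite subr_gt0 lt_neqAle c11 andbT.
    apply/eqP => e; move: cs1; rewrite e expr1n => /eqP; rewrite -subr_eq0 addrC addKr sqrf_eq0.
    by apply/negP.
  lra.
set u := (A^T - beta%:M) *m w.
have nu : nrm2 u = 1 - beta ^+ 2 by rewrite /u nrm2_shiftT // nw -bE; ring.
set N2 := Num.sqrt (1 - beta ^+ 2).
have N2pos : 0 < N2 by rewrite sqrtr_gt0; nra.
have N2sq : N2 ^+ 2 = 1 - beta ^+ 2 by rewrite sqr_sqrtr //; nra.
have vE : aci_step A v = N2^-1 *: u.
  by rewrite /aci_step /normalize enorm_nrm2 -/w -/beta -/u nu.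
rewrite vE; split.
  by rewrite nrm2Z nu -N2sq exprVn mulVf // sqrf_eq0 gt_eqF.
have [Aw0 Aw1] := ATv0 w hm.
rewrite !coordnZ /u !coordn_shift Aw0 Aw1.
have -> : N2^-1 * (c 1 * X w 0 - s 1 * X w 1 - beta * X w 0) * X v 0 +
          N2^-1 * (s 1 * X w 0 + c 1 * X w 1 - beta * X w 1) * X v 1 =
   N2^-1 * N1^-1 * (((c 1 ^+ 2 + s 1 ^+ 2) - (alpha + beta) * c 1 + alpha * beta) * (X v 0 ^+ 2 + X v 1 ^+ 2)).
  by rewrite w0 w1; ring.
rewrite cs1.
have aK : N1 * N2 <= 1 - (alpha + beta) * c 1 + alpha * beta.
  have := sqr_ge0 (N1 - N2); nra.
have t1 : 1 <= N2^-1 * N1^-1 * (1 - (alpha + beta) * c 1 + alpha * beta).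
  rewrite -invfM mulrC ler_pdivlMr ?mul1r 1?mulrC //; exact: mulr_gt0.
nra.
Qed.


Lemma nrm2_ge0 v : 0 <= nrm2 v.
Proof.
by rewrite /nrm2 addr_ge0 ?sqr_ge0 // sumr_ge0 // => q _; rewrite addr_ge0 ?sqr_ge0.
Qed.

Definition rest (v : 'cV[R]_n) :=
  \sum_(1 <= q < m) (X v (2 * q) ^+ 2 + X v (2 * q + 1) ^+ 2) + X v (2 * m) ^+ 2.

Lemma rest_ge0 v : 0 <= rest v.
Proof.
by rewrite /rest addr_ge0 ?sqr_ge0 // sumr_ge0 // => q _; rewrite addr_ge0 ?sqr_ge0.
Qed.

Lemma nrm2_rest (hm : (0 < m)%N) v : nrm2 v = X v 0 ^+ 2 + X v 1 ^+ 2 + rest v.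
Proof. by rewrite /nrm2 /rest big_ltn // muln0 add0n addrA. Qed.

Lemma coordn_blk k (v : 'cV[R]_k) j i : (i < 2)%N -> coordn (blk v j) i = coordn v (2 * j.-1 + i).
Proof. by move=> hi; rewrite (coordn_ord _ (Ordinal hi)) mxE. Qed.

Lemma enorm2 (u : 'cV[R]_2) : enorm u = Num.sqrt (X u 0 ^+ 2 + X u 1 ^+ 2).
Proof. by rewrite enorm_X big_ltn // big_ltn // big_geq // addr0. Qed.

Lemma enorm_blk k (v : 'cV[R]_k) j :
  enorm (blk v j) = Num.sqrt (X v (2 * j.-1) ^+ 2 + X v (2 * j.-1 + 1) ^+ 2).
Proof. by rewrite enorm2 !coordn_blk // addn0. Qed.

Lemma step_zero : aci_step A 0 = 0.
Proof. by rewrite /aci_step /aci_w /normalize !mulmx0 !scaler0 mulmx0 scaler0. Qed.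

Lemma step_m0 (hm : m = 0%N) v : nrm2 v = 1 -> aci_step A v = 0.
Proof.
move=> nv.
have qn : qf v = nrm2 v.
  by rewrite /qf /nrm2 !big_geq // hm.
have Hcs : forall j, (1 <= j <= m)%N -> c j ^+ 2 + s j ^+ 2 = 1 by move=> j; rewrite hm; lia.
set alpha := (v^T *m A *m v) 0 0.
have aE : alpha = 1 by rewrite /alpha qf_E qn.
have wE : aci_w A v = 0.
  rewrite /aci_w /normalize enorm_nrm2 -/alpha nrm2_shift // qn nv aE.
  have -> : 1 - 2 * 1 * 1 + 1 ^+ 2 * 1 = 0 :> R by ring.
  by rewrite sqrtr0 invr0 scale0r.
by rewrite /aci_step wE mulmx0 /normalize scaler0.
Qed.

Lemma blk_sq_le (rho : R) (u v : 'cV[R]_n) j : 0 <= rho ->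
  enorm (blk u j) <= rho * enorm (blk v j) ->
  X u (2 * j.-1) ^+ 2 + X u (2 * j.-1 + 1) ^+ 2 <=
  rho ^+ 2 * (X v (2 * j.-1) ^+ 2 + X v (2 * j.-1 + 1) ^+ 2).
Proof.
rewrite !enorm_blk => hr h.
set a := _ + _ in h *; set d := X v _ ^+ 2 + _ in h *.
have a0 : 0 <= a by rewrite /a addr_ge0 ?sqr_ge0.
have d0 : 0 <= d by rewrite /d addr_ge0 ?sqr_ge0.
rewrite -(sqr_sqrtr a0) -(sqr_sqrtr d0).
have := sqrtr_ge0 a; have := sqrtr_ge0 d; nra.
Qed.


Lemma X_idx k (v : 'cV[R]_k) i j : i = j -> coordn v i = coordn v j.
Proof. by move->. Qed.

Lemma coordn0 k i : coordn (0 : 'cV[R]_k) i = 0.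
Proof. by rewrite /coordn; case: insubP => // *; rewrite mxE. Qed.

Lemma main_aux (v0 : 'cV[R]_n) (k0 : nat) (rho : R) :
  (forall j, (1 <= j <= m)%N -> c j ^+ 2 + s j ^+ 2 = 1) ->
  (forall j, (1 <= j <= m)%N -> s j != 0) ->
  0 < c 1 ->
  (forall j, (1 <= j < m)%N -> c j < c j.+1) ->
  enorm v0 = 1 ->
  blk v0 1 != 0 ->
  0 < rho < 1 ->
  (forall k, (k0 <= k)%N ->
     (forall j, (2 <= j <= m)%N ->
        enorm (blk (aci_v A v0 k.+1) j) <= rho * enorm (blk (aci_v A v0 k) j)) /\
     (b -> `|coordn (aci_v A v0 k.+1) (2 * m)| <= rho * `|coordn (aci_v A v0 k) (2 * m)|)) ->
  forall k, (k0 <= k)%N ->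
    enorm (blk (aci_v A v0 k.+1) 1 - blk (aci_v A v0 k) 1) <= rho ^+ (k - k0).
Proof.
move=> Hcs Hs c1pos Hch ev0 bv0 /andP[rpos rlt1] Hyp k hk.
have nv0 : nrm2 v0 = 1.
  by move: ev0; rewrite enorm_nrm2 => e; rewrite -(sqr_sqrtr (nrm2_ge0 v0)) e expr1n.
have vS : forall k, aci_v A v0 k.+1 = aci_step A (aci_v A v0 k) by [].
have p0 : 0 < X v0 0 ^+ 2 + X v0 1 ^+ 2.
  rewrite lt_neqAle addr_ge0 ?sqr_ge0 // andbT; apply/negP => /eqP e.
  have e0 : X v0 0 = 0 by apply/eqP; rewrite -sqrf_eq0 eq_le sqr_ge0 andbT; have := sqr_ge0 (X v0 1); lra.
  have e1 : X v0 1 = 0 by apply/eqP; rewrite -sqrf_eq0 eq_le sqr_ge0 andbT; have := sqr_ge0 (X v0 0); lra.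
  move/negP: bv0; apply; apply/eqP/matrixP => i j; rewrite !mxE.
  by case: i => [[|[|i]]] //= hi; rewrite ?e0 ?e1.
have dist2 : forall u : 'cV[R]_n, enorm (blk (aci_step A u) 1 - blk u 1) =
   Num.sqrt ((X (aci_step A u) 0 - X u 0) ^+ 2 + (X (aci_step A u) 1 - X u 1) ^+ 2).
  by move=> u; rewrite enorm2 !coordnB !coordn_blk.
have rpow0 : 0 <= rho ^+ (k - k0) by rewrite exprn_ge0 // ltW.
case: (posnP m) => hm.
  have v1 : aci_v A v0 1 = 0 by rewrite vS step_m0.
  have vk : forall k, aci_v A v0 k.+1 = 0.
    by elim=> [//|k' IH]; rewrite vS IH step_zero.
  case: k hk rpow0 => [|k'] hk rpow0; last by rewrite !vk subrr /enorm big1 ?sqrtr0 // => i _; rewrite mxE expr0n.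
  rewrite vS dist2 -vS vk !coordn0 !sub0r !sqrrN.
  move: hk; rewrite leqn0 => /eqP ->; rewrite subnn expr0 -sqrtr1 ler_sqrt ?ler01 //.
  have -> : X v0 1 = 0 by rewrite coordn_out // hm; case: (b).
  rewrite -nv0 /nrm2 big_geq ?hm // add0r (X_idx v0 (_ : (2 * m = 0)%N)) ?hm //.
  by rewrite expr0n addr0.
have Hc : forall j, (1 <= j <= m)%N -> c 1 <= c j.
  elim=> [//|j IH] /andP[_ hj]; case: j IH hj => [//|j] IH hj.
  apply: (le_trans (IH _)); first lia.
  by apply: ltW; apply: Hch; lia.
have Hc1 : forall j, (1 <= j <= m)%N -> c j <= 1.
  by move=> j hj; have := Hcs j hj; have := sqr_ge0 (s j); nra.
have inv : forall k, nrm2 (aci_v A v0 k) = 1 /\ 0 < X (aci_v A v0 k) 0 ^+ 2 + X (aci_v A v0 k) 1 ^+ 2.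
  elim=> [|k' [IH1 IH2]]; first by split.
  have [h1 h2] := step_key Hcs (Hs 1 ltac:(lia)) Hc Hc1 c1pos hm IH1 IH2.
  rewrite vS; split=> //.
  set y0 := X (aci_step A (aci_v A v0 k')) 0 in h2 *; set y1 := X (aci_step A (aci_v A v0 k')) 1 in h2 *.
  rewrite lt_neqAle addr_ge0 ?sqr_ge0 // andbT; apply/negP => /eqP e.
  have e0 : y0 = 0 by apply/eqP; rewrite -sqrf_eq0 eq_le sqr_ge0 andbT; have := sqr_ge0 y1; lra.
  have e1 : y1 = 0 by apply/eqP; rewrite -sqrf_eq0 eq_le sqr_ge0 andbT; have := sqr_ge0 y0; lra.
  move: h2; rewrite e0 e1 !mul0r addr0; lra.
have restdec : forall k, (k0 <= k)%N -> rest (aci_v A v0 k.+1) <= rho ^+ 2 * rest (aci_v A v0 k).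
  move=> k' hk'; have [Hb Ht] := Hyp k' hk'.
  rewrite /rest mulrDr mulr_sumr; apply: lerD.
    apply: ler_sum_nat => q /andP[hq1 hq2].
    by have := blk_sq_le (ltW rpos) (Hb q.+1 ltac:(lia)).
  have [hb|hb] := orP (orbN b).
    have := Ht hb; rewrite -!(real_normK (num_real (X _ (2 * m)))) => h.
    have := normr_ge0 (X (aci_v A v0 k'.+1) (2 * m)); nra.
  by rewrite !tail0 // expr0n mulr0.
have restb : forall i, rest (aci_v A v0 (k0 + i)) <= (rho ^+ i) ^+ 2.
  elim=> [|i IH].
    rewrite addn0 expr0 expr1n; have := nrm2_rest hm (aci_v A v0 k0).
    have [h1 _] := inv k0; have := sqr_ge0 (X (aci_v A v0 k0) 0); have := sqr_ge0 (X (aci_v A v0 k0) 1); lra.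
  rewrite addnS; apply: (le_trans (restdec _ (leq_addr _ _))).
  rewrite [rho ^+ i.+1]exprS exprMn; apply: ler_wpM2l; first by rewrite sqr_ge0.
  exact: IH.
have [n1 pk] := inv k.
have [h1 h2] := step_key Hcs (Hs 1 ltac:(lia)) Hc Hc1 c1pos hm n1 pk.
rewrite vS dist2.
rewrite -(ger0_norm rpow0) -sqrtr_sqr ler_sqrt ?sqr_ge0 //.
have := restb (k - k0)%N; rewrite subnKC //.
have := nrm2_rest hm (aci_v A v0 k); have := nrm2_rest hm (aci_step A (aci_v A v0 k)).
have := rest_ge0 (aci_step A (aci_v A v0 k)).
rewrite h1 n1; nra.
Qed.

End Aux.

Unset Implicit Arguments.
Theorem lemma4p7 (R : realType) (m : nat) (b : bool) (c s : nat -> R)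
  (v0 : 'cV[R]_(2 * m + b)) (k0 : nat) (rho : R) :
  (forall j, (1 <= j <= m)%N -> c j ^+ 2 + s j ^+ 2 = 1) ->
  (forall j, (1 <= j <= m)%N -> s j != 0) ->
  0 < c 1 ->
  (forall j, (1 <= j < m)%N -> c j < c j.+1) ->
  enorm v0 = 1 ->
  (2 <= grade (blockrot m b c s) v0)%N ->
  blk v0 1 != 0 ->
  0 < rho < 1 ->
  (forall k, (k0 <= k)%N ->
     (forall j, (2 <= j <= m)%N ->
        enorm (blk (aci_v (blockrot m b c s) v0 k.+1) j)
          <= rho * enorm (blk (aci_v (blockrot m b c s) v0 k) j)) /\
     (b -> `|coordn (aci_v (blockrot m b c s) v0 k.+1) (2 * m)|
            <= rho * `|coordn (aci_v (blockrot m b c s) v0 k) (2 * m)|)) ->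
  forall k, (k0 <= k)%N ->
    enorm (blk (aci_v (blockrot m b c s) v0 k.+1) 1 - blk (aci_v (blockrot m b c s) v0 k) 1)
      <= rho ^+ (k - k0).
Proof.
move=> Hcs Hs c1 Hch ev0 _ bv0 hr Hyp k hk.
exact: (main_aux Hcs Hs c1 Hch ev0 bv0 hr Hyp hk).
Qed.
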